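(* For all even integers $n\ge0$ and real numbers $a\ge1$, $x\in(-1,1)$, we have $\Lambda_{n,a}(x)\ge1$. Equality holds if and only if $n=0$, or $n=2$, $a=1$, $x=-1/2$.
   Context: $U_j$ denotes the Chebyshev polynomial of the second kind of degree $j$, i.e. $U_j(\cos t)=\sin((j+1)t)/\sin t$. For a real number $a$ and integers $0\le m$, $\binom{m+a}{m}=\frac{(a+1)(a+2)\cdots(a+m)}{m!}$ (equal to $1$ when $m=0$). For an integer $n\ge0$, $\Lambda_{n,a}(x)=\sum_{j=0}^n\binom{n+a-j}{n-j}U_j(x)$. *)

(* Defs.v *)
From Stdlib Require Import Reals Lra Lia Arith Factorial.
Open Scope R_scope.

(* Chebyshev polynomials of the second kind, via the standard recurrence
   U_0 = 1, U_1 = 2x, U_{j+2} = 2x U_{j+1} - U_j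
   (equivalently U_j(cos t) = sin((j+1)t)/sin t). *)
Fixpoint chebU_pair (j : nat) (x : R) : R * R :=
  match j with
  | O => (1, 2 * x)
  | S k => let (u, v) := chebU_pair k x in (v, 2 * x * v - u)
  end.

Definition chebU (j : nat) (x : R) : R := fst (chebU_pair j x).

(* generalized binomial binom(m+a, m) = (a+1)(a+2)...(a+m)/m! *)
Fixpoint rising_prod (a : R) (m : nat) : R :=
  match m with
  | O => 1
  | S k => rising_prod a k * (a + INR (S k))
  end.

Definition gbinom (m : nat) (a : R) : R := rising_prod a m / INR (fact m).

Definition Lambda (n : nat) (a x : R) : R :=
  sum_f_R0 (fun j => gbinom (n - j) a * chebU j x) n.

(* Main.v *)
Require Import Defs.
From Stdlib Require Import Reals Lra Lia Arith Factorial.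
Open Scope R_scope.

Lemma sum_rev (f : nat -> R) n :
  sum_f_R0 f n = sum_f_R0 (fun j => f (n - j)%nat) n.
Proof.
  induction n as [|n IH].
  - reflexivity.
  - rewrite (decomp_sum (fun j => f (S n - j)%nat)) by lia.
    simpl pred. simpl sum_f_R0 at 1. rewrite IH.
    replace (S n - 0)%nat with (S n) by lia.
    simpl. lra.
Qed.

Definition Tri (F : nat -> nat -> R) n :=
  sum_f_R0 (fun j => sum_f_R0 (fun k => F j k) (n - j)) n.

Lemma Tri_step F n :
  Tri F (S n) = Tri F n + sum_f_R0 (fun j => F j (S n - j)%nat) (S n).
Proof.
  unfold Tri. rewrite (tech5 _ n). rewrite (tech5 (fun j => F j (S n - j)%nat) n).
  rewrite (sum_eq (fun j => sum_f_R0 (fun k => F j k) (S n - j))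
     (fun j => sum_f_R0 (fun k => F j k) (n - j) + F j (S n - j)%nat)).
  - rewrite sum_plus. rewrite Nat.sub_diag. simpl (sum_f_R0 (fun k => F (S n) k) 0).
    replace (S n - S n)%nat with 0%nat by lia. lra.
  - intros i Hi. replace (S n - i)%nat with (S (n - i)) by lia. simpl. reflexivity.
Qed.

Lemma Tri_swap F n : Tri F n = Tri (fun k j => F j k) n.
Proof.
  induction n as [|n IH].
  - reflexivity.
  - rewrite !Tri_step, IH. f_equal.
    rewrite sum_rev. apply sum_eq. intros i Hi.
    replace (S n - (S n - i))%nat with i by lia. reflexivity.
Qed.

Lemma rising_S a k : rising_prod a (S k) = rising_prod a k * (a + INR (S k)).
Proof. reflexivity. Qed.

Lemma gbinom0 s : gbinom 0 s = 1.
Proof. unfold gbinom; simpl. lra. Qed.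

Lemma rising_m1 s m : rising_prod (s - 1) (S m) = s * rising_prod s m.
Proof.
  induction m as [|m IH].
  - simpl. lra.
  - change (rising_prod (s-1) (S (S m))) with (rising_prod (s-1) (S m) * (s - 1 + INR (S (S m)))).
    rewrite IH. change (rising_prod s (S m)) with (rising_prod s m * (s + INR (S m))). rewrite !S_INR. ring.
Qed.

Lemma gpascal m s : gbinom (S m) s = gbinom m s + gbinom (S m) (s - 1).
Proof.
  unfold gbinom. rewrite rising_m1.
  change (rising_prod s (S m)) with (rising_prod s m * (s + INR (S m))).
  rewrite fact_simpl, mult_INR. rewrite S_INR.
  pose proof (INR_fact_neq_0 m). pose proof (pos_INR m).
  field. split; [assumption| lra].
Qed.

Lemma cum m s : gbinom m s = sum_f_R0 (fun i => gbinom i (s - 1)) m.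
Proof.
  induction m as [|m IH].
  - simpl. rewrite !gbinom0. reflexivity.
  - rewrite gpascal, IH. reflexivity.
Qed.

Lemma gbinom_0 m : gbinom m 0 = 1.
Proof.
  unfold gbinom. assert (rising_prod 0 m = INR (fact m)).
  { induction m as [|m IH]. reflexivity. rewrite rising_S, IH, fact_simpl, mult_INR. ring. }
  rewrite H. field. apply INR_fact_neq_0.
Qed.

Lemma conv_coef m a :
  gbinom m a = sum_f_R0 (fun k => gbinom k (a - 2) * gbinom (m - k) 1) m.
Proof.
  rewrite cum.
  rewrite (sum_eq (fun i => gbinom i (a - 1))
     (fun i => sum_f_R0 (fun k => gbinom k (a-2)) i)).
  2:{ intros i _. rewrite cum. replace (a - 1 - 1) with (a - 2) by ring. reflexivity. }
  rewrite sum_rev.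
  change (sum_f_R0 (fun j => sum_f_R0 (fun k => gbinom k (a - 2)) (m - j)) m)
    with (Tri (fun j k => gbinom k (a-2)) m).
  rewrite Tri_swap. unfold Tri. apply sum_eq. intros k _.
  rewrite (cum (m - k) 1). replace (1 - 1) with 0 by ring.
  rewrite scal_sum. apply sum_eq. intros; rewrite gbinom_0; ring.
Qed.

Lemma conv_Lam (U g h c : nat -> R) :
  (forall m, g m = sum_f_R0 (fun k => c k * h (m - k)%nat) m) ->
  forall n, sum_f_R0 (fun j => g (n - j)%nat * U j) n =
   sum_f_R0 (fun k => c k * sum_f_R0 (fun j => h (n - k - j)%nat * U j) (n - k)) n.
Proof.
  intros Hg n.
  rewrite (sum_eq _ (fun j => sum_f_R0 (fun k => c k * h (n - j - k)%nat * U j) (n - j))).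
  2:{ intros j _. rewrite Hg. rewrite <- scal_sum.
      symmetry. rewrite Rmult_comm. reflexivity. }
  change (sum_f_R0 (fun j => sum_f_R0 (fun k => c k * h (n - j - k)%nat * U j) (n - j)) n)
   with (Tri (fun j k => c k * h (n - j - k)%nat * U j) n).
  rewrite Tri_swap. unfold Tri. apply sum_eq. intros k _.
  rewrite scal_sum. apply sum_eq. intros j _.
  replace (n - j - k)%nat with (n - k - j)%nat by lia. ring.
Qed.

Lemma chebU_rec j x : chebU (S (S j)) x = 2 * x * chebU (S j) x - chebU j x.
Proof.
  unfold chebU. simpl. destruct (chebU_pair j x) as [u v]. simpl. reflexivity.
Qed.

Lemma chebU0 x : chebU 0 x = 1.
Proof. reflexivity. Qed.
Lemma chebU1 x : chebU 1 x = 2 * x.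
Proof. reflexivity. Qed.

Lemma factA n s x : Lambda (S n) s x = Lambda n s x + Lambda (S n) (s - 1) x.
Proof.
  unfold Lambda. rewrite !tech5. rewrite Nat.sub_diag, !gbinom0.
  rewrite (sum_eq (fun j => gbinom (S n - j) s * chebU j x)
     (fun j => gbinom (n - j) s * chebU j x + gbinom (S n - j) (s - 1) * chebU j x)).
  - rewrite sum_plus. ring.
  - intros i Hi. replace (S n - i)%nat with (S (n - i)) by lia. rewrite gpascal. ring.
Qed.

Lemma Lam_m1 n x : Lambda n (-1) x = chebU n x.
Proof.
  destruct n as [|n].
  - unfold Lambda. simpl. rewrite gbinom0, chebU0. ring.
  - unfold Lambda. rewrite tech5, Nat.sub_diag, gbinom0.
    rewrite (sum_eq _ (fun _ => 0)).
    + rewrite sum_cte. ring.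
    + intros i Hi. replace (S n - i)%nat with (S (n - i)) by lia.
      assert (H : forall k, rising_prod (-1) (S k) = 0).
      { induction k. simpl. ring. rewrite rising_S, IHk. ring. }
      unfold gbinom. rewrite H. unfold Rdiv. ring.
Qed.

Definition L (x : R) m := Lambda m 0 x.
Definition E (x : R) m := Lambda m 1 x.

Lemma L0 {x : R} : L x 0 = 1.
Proof. unfold L, Lambda. simpl. rewrite gbinom0, chebU0. ring. Qed.

Lemma LS {x : R} m : L x (S m) = L x m + chebU (S m) x.
Proof. unfold L. rewrite factA. replace (0 - 1) with (-1) by ring. rewrite Lam_m1. reflexivity. Qed.

Lemma E0 {x : R} : E x 0 = 1.
Proof. unfold E, Lambda. simpl. rewrite gbinom0, chebU0. ring. Qed.

Lemma ES {x : R} m : E x (S m) = E x m + L x (S m).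
Proof. unfold E. rewrite factA. replace (1 - 1) with 0 by ring. reflexivity. Qed.

Lemma Lrec {x : R} m : L x (S (S m)) = 2 * x * L x (S m) - L x m + 1.
Proof.
  induction m as [|m IH].
  - rewrite !LS, L0, chebU_rec, chebU1, chebU0. ring.
  - rewrite (LS (S (S m))), chebU_rec.
    assert (A1 : chebU (S (S m)) x = L x (S (S m)) - L x (S m)) by (rewrite (LS (S m)); ring).
    assert (A2 : chebU (S m) x = L x (S m) - L x m) by (rewrite (LS m); ring).
    rewrite A1, A2, IH. ring.
Qed.

Fixpoint upair (c : R) (k : nat) : R * R :=
  match k with O => (0, 1) | S k => let (p, q) := upair c k in (q, 2 * c * q - p) end.
Definition u (c : R) k := fst (upair c k).
Lemma u_rec {c : R} k : u c (S (S k)) = 2 * c * u c (S k) - u c k.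
Proof. unfold u. simpl. destruct (upair c k) as [p q]. reflexivity. Qed.
Lemma u0 {c : R} : u c 0 = 0. Proof. reflexivity. Qed.
Lemma u1 {c : R} : u c 1 = 1. Proof. reflexivity. Qed.
Lemma cassini {c : R} k : u c (S k) ^ 2 - 2 * c * u c (S k) * u c k + u c k ^ 2 = 1.
Proof.
  induction k as [|k IH].
  - rewrite u0, u1. ring.
  - rewrite u_rec. rewrite <- IH. ring.
Qed.
Lemma u_sq {c : R} k : u c (S (S k)) ^ 2 = 2 * (2 * c ^ 2 - 1) * u c (S k) ^ 2 - u c k ^ 2 + 2.
Proof.
  rewrite u_rec. pose proof (@cassini c k). nra.
Qed.

Lemma Q_sq c m : let x := 2 * c ^ 2 - 1 in
  L x (S m) + L x m = u c (S (S m)) ^ 2.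
Proof.
  intro x.
  assert (H : forall m, L x (S m) + L x m = u c (S (S m)) ^ 2 /\
                        L x (S (S m)) + L x (S m) = u c (S (S (S m))) ^ 2).
  { induction m0 as [|m0 [IH1 IH2]].
    - rewrite Lrec, !LS, L0, chebU1. rewrite (@u_rec c 1), (@u_rec c 0), (@u1 c), (@u0 c). unfold x. split; ring.
    - split. exact IH2.
      rewrite (@u_sq c (S (S m0))). fold x. rewrite <- IH1, <- IH2.
      rewrite (@Lrec x (S m0)), (@Lrec x m0). ring. }
  apply H.
Qed.

Lemma sum_ge2 (f : nat -> R) n : (forall k, 0 <= f k) -> (1 <= n)%nat ->
  f 0%nat + f 1%nat <= sum_f_R0 f n.
Proof.
  intros Hf Hn. induction n as [|n IH]. lia.
  destruct n. simpl. lra. simpl in *. specialize (IH ltac:(lia)). pose proof (Hf (S (S n))). lra.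
Qed.

Lemma rising_nonneg a k : 1 <= a -> 0 <= rising_prod (a - 2) k.
Proof.
  intro Ha. induction k. simpl; lra. rewrite rising_S. apply Rmult_le_pos; auto.
  rewrite S_INR. pose proof (pos_INR k). lra.
Qed.

Lemma cnonneg a k : 1 <= a -> 0 <= gbinom k (a - 2).
Proof.
  intro Ha. unfold gbinom. apply Rmult_le_pos. apply rising_nonneg; auto.
  apply Rlt_le, Rinv_0_lt_compat. apply lt_0_INR, lt_O_fact.
Qed.

Lemma c1 a : gbinom 1 (a - 2) = a - 1.
Proof. unfold gbinom. simpl. field. Qed.

Lemma Lam_conv n a x :
  Lambda n a x = sum_f_R0 (fun k => gbinom k (a - 2) * E x (n - k)) n.
Proof.
  unfold Lambda, E. apply (conv_Lam (fun j => chebU j x) (fun m => gbinom m a)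
    (fun m => gbinom m 1) (fun k => gbinom k (a - 2))).
  intro m. apply conv_coef.
Qed.

Definition cc (x : R) := sqrt ((1 + x) / 2).
Lemma xc (x : R) (Hx : -1 < x < 1) : x = 2 * cc x ^ 2 - 1.
Proof. unfold cc. simpl. rewrite Rmult_1_r, sqrt_sqrt; lra. Qed.

Lemma E_SS (x : R) (Hx : -1 < x < 1) m : E x (S (S m)) = E x m + u (cc x) (S (S (S m))) ^ 2.
Proof.
  rewrite !ES. pose proof (Q_sq (cc x) (S m)) as H. cbv zeta in H. rewrite <- (xc x Hx) in H.
  rewrite <- H. ring.
Qed.

Lemma E1 (x : R) (Hx : -1 < x < 1) : E x 1 = 2 + 2 * x.
Proof. rewrite ES, E0, LS, L0, chebU1. ring. Qed.

Lemma E_nonneg (x : R) (Hx : -1 < x < 1) m : 0 <= E x m /\ 0 <= E x (S m).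
Proof.
  induction m as [|m [IH1 IH2]].
  - rewrite (E1 x Hx), E0. lra.
  - split; auto. rewrite (E_SS x Hx). pose proof (pow2_ge_0 (u (cc x) (S (S (S m))))). lra.
Qed.

Lemma E_even (x : R) (Hx : -1 < x < 1) p : 1 <= E x (2 * p).
Proof.
  induction p. simpl. rewrite E0. lra.
  replace (2 * S p)%nat with (S (S (2 * p))) by lia. rewrite (E_SS x Hx).
  pose proof (pow2_ge_0 (u (cc x) (S (S (S (2 * p)))))). lra.
Qed.

Lemma u3 (x : R) (Hx : -1 < x < 1) : u (cc x) 3 = 2 * x + 1.
Proof. pose proof (xc x Hx) as HE. set (c := cc x) in *. clearbody c.
  rewrite (@u_rec c 1), (@u_rec c 0), (@u1 c), (@u0 c). rewrite HE. ring. Qed.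
Lemma u5 (x : R) (Hx : -1 < x < 1) : u (cc x) 5 = (2 * x + 1) * (2 * x) - 1.
Proof. pose proof (xc x Hx) as HE. set (c := cc x) in *. clearbody c.
  rewrite (@u_rec c 3), (@u_rec c 2), (@u_rec c 1), (@u_rec c 0), (@u1 c), (@u0 c). rewrite HE. ring. Qed.

Lemma E2 (x : R) (Hx : -1 < x < 1) : E x 2 = 1 + (2 * x + 1) ^ 2.
Proof. rewrite (E_SS x Hx), E0, <- (u3 x Hx). reflexivity. Qed.

Lemma E_big (x : R) (Hx : -1 < x < 1) p : 1 < E x (S (S (S (S (2 * p))))).
Proof.
  assert (H4 : 1 < E x 4).
  { rewrite (E_SS x Hx), (E2 x Hx). change (S (S (S 2))) with 5%nat. rewrite (u5 x Hx).
    destruct (Req_dec (2 * x + 1) 0) as [H|H].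
    - rewrite H. lra.
    - pose proof (pow2_ge_0 ((2 * x + 1) * (2 * x) - 1)).
      assert (0 < (2 * x + 1) ^ 2) by (simpl; rewrite Rmult_1_r; apply Rsqr_pos_lt; auto). lra. }
  induction p. exact H4.
  replace (S (S (S (S (2 * S p))))) with (S (S (S (S (S (S (2 * p))))))) by lia.
  rewrite (E_SS x Hx). pose proof (pow2_ge_0 (u (cc x) (S (S (S (S (S (S (S (2 * p)))))))))). lra.
Qed.

Theorem theorem4p1 :
  forall (n : nat) (a x : R),
    Nat.Even n -> 1 <= a -> -1 < x < 1 ->
    1 <= Lambda n a x /\
    (Lambda n a x = 1 <-> (n = 0%nat \/ (n = 2%nat /\ a = 1 /\ x = -1/2))).
Proof.
  intros n a x [p Hp] Ha Hx. subst n.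
  destruct p as [|p].
  - assert (H0 : Lambda 0 a x = 1) by (unfold Lambda; simpl; rewrite gbinom0, chebU0; ring).
    change (2 * 0)%nat with 0%nat. rewrite H0. split. lra. split; auto.
  - assert (Hge : E x (2 * S p) + (a - 1) * E x (2 * S p - 1) <= Lambda (2 * S p) a x).
    { rewrite Lam_conv. rewrite <- c1.
      replace (E x (2 * S p)) with (gbinom 0 (a - 2) * E x (2 * S p - 0)).
      2:{ rewrite gbinom0, Nat.sub_0_r. ring. }
      apply (sum_ge2 (fun k => gbinom k (a - 2) * E x (2 * S p - k))).
      - intro k. apply Rmult_le_pos. apply cnonneg; auto. apply (E_nonneg x Hx).
      - lia. }
    assert (HE : 1 <= E x (2 * S p)) by (apply E_even; auto).
    assert (HE1 : 0 <= E x (2 * S p - 1)) by apply (E_nonneg x Hx).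
    assert (Hp1 : 0 <= (a - 1) * E x (2 * S p - 1)) by (apply Rmult_le_pos; lra).
    split. lra.
    split.
    + intro Heq. right.
      destruct p as [|p].
      * simpl in *. rewrite E2 in *; auto. rewrite E1 in *; auto.
        assert (Hsq : (2 * x + 1) ^ 2 = 0) by (pose proof (pow2_ge_0 (2*x+1)); nra).
        assert (x = -1/2) by (simpl in Hsq; nra).
        assert (a = 1) by nra. auto.
      * exfalso. pose proof (E_big x Hx p).
        replace (2 * S (S p))%nat with (S (S (S (S (2 * p))))) in * by lia. lra.
    + intros [H|[H1 [H2 H3]]]. lia.
      assert (p = 0%nat) by lia. subst p. rewrite H2. simpl.
      change (Lambda 2 1 x = 1). fold (E x 2). rewrite E2 by auto. rewrite H3. lra.
Qed.
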